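(* Let $S$ be any string of length $n$ satisfying the $\varepsilon$-self-matching property. Then $S$ together with the minimum relative suffix distance decoding algorithm is an $(n,\delta)$-indexing algorithm with at most $n(4\delta+6\varepsilon)$ misdecodings.
   Context: $\mathrm{ED}$ is insertion/deletion edit distance; $S[i,j]$ is positions $i..j$, $S(i,j]=S[i+1,j]$, and for $i<1$, $S[i,j]=\bot^{-i+1}S[1,j]$ with $\bot$ not in the alphabet. $\mathrm{RSD}(S,S')=\max_{k>0}\frac{\mathrm{ED}(S(|S|-k,|S|],S'(|S'|-k,|S'|])}{2k}$. A monotone matching between $S$ and itself is a set of pairs $(a_1,b_1),\dots,(a_m,b_m)$ with $a_1<\dots<a_m$, $b_1<\dots<b_m$, $S[a_i]=S[b_i]$; a pair is bad if $a_i\ne b_i$. $S$ satisfies the $\varepsilon$-self-matching property if every such matching has fewer than $\varepsilon|S|$ bad pairs. Indexing problem: an adversary applies at most $n\delta$ insertions and deletions to $S$, producing $S_\tau$, with an order-preserving alignment in which each $S[i]$ is deleted or delivered unchanged as a unique symbol of $S_\tau$, and other symbols of $S_\tau$ are inserted. An $(n,\delta)$-indexing algorithm outputs for each position of $S_\tau$ either $\bot$ or an index in $\{1,\dots,n\}$; a successfully transmitted position (delivered from $S[i]$) is correctly decoded if the output is $i$; the algorithm has at most $k$ misdecodings if for every such corruption at most $k$ successfully transmitted positions are not correctly decoded. The minimum relative suffix distance decoding algorithm outputs for position $j$ of $S_\tau$ an index $l$ minimizing $\mathrm{RSD}(S[1,l],S_\tau[1,j])$. *)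

(* Defs.v *)
From HB Require Import structures.
From mathcomp Require Import all_boot all_order all_algebra.
From mathcomp Require Import boolp classical_sets reals.
Set Implicit Arguments. Unset Strict Implicit. Unset Printing Implicit Defensive.
Import Order.TTheory GRing.Theory Num.Theory.
Local Open Scope ring_scope.
Local Open Scope classical_set_scope.

Section Defs.
Variable T : eqType.

Definition lcs (a b : seq T) : nat :=
  (\max_(m : (size a).-tuple bool | subseq (mask m a) b) size (mask m a))%N.

(* Insertion/deletion edit distance: delete |a|-|c| symbols of a to reach a
   common subsequence c, then insert |b|-|c| symbols; minimised over c. *)
Definition ED (a b : seq T) : nat := (size a + size b - 2 * lcs a b)%N.
End Defs.

(* Strings over alphabet T; [None] plays the role of the padding symbol ⊥. *)
(* suffix k S = S(|S|-k, |S|] = S[|S|-k+1, |S|], padded on the left with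
   ⊥^(k-|S|) when k > |S|. *)
Definition suffix (T : eqType) (k : nat) (S : seq T) : seq (option T) :=
  drop (size S - k) (nseq (k - size S) None ++ map Some S).

Definition RSD (R : realType) (T : eqType) (S S' : seq T) : R :=
  sup [set r : R | exists2 k : nat, (0 < k)%N &
         r = (ED (suffix k S) (suffix k S'))%:R / (2 * k%:R)].

(* A monotone matching between S and S' (1-indexed positions): pairs
   (a_i, b_i) strictly increasing in both coordinates, with S[a_i] = S'[b_i]. *)
Definition monotone_matching (T : eqType) (S S' : seq T)
    (M : seq (nat * nat)) : bool :=
  sorted (fun p q : nat * nat => (p.1 < q.1)%N && (p.2 < q.2)%N) M &&
  all (fun p : nat * nat =>
         [&& (0 < p.1 <= size S)%N, (0 < p.2 <= size S')%N &
             onth S p.1.-1 == onth S' p.2.-1]) M.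

Definition bad_pairs (M : seq (nat * nat)) : nat :=
  count (fun p : nat * nat => p.1 != p.2) M.

Definition self_matching (R : realType) (T : eqType) (eps : R) (S : seq T) :=
  forall M, monotone_matching S S M -> (bad_pairs M)%:R < eps * (size S)%:R.

Definition min_RSD_decoder (R : realType) (T : eqType) (S St : seq T)
    (dec : nat -> nat) : Prop :=
  forall j, (1 <= j <= size St)%N ->
    (1 <= dec j <= size S)%N /\
    forall l, (1 <= l <= size S)%N ->
      RSD R (take (dec j) S) (take j St) <= RSD R (take l S) (take j St).

(* A corruption St of S with alignment M: M is an order-preserving matching
   of delivered symbols (S[i] delivered as St[j] for (i,j) in M); symbols of S
   not in M are deleted, symbols of St not in M are inserted. *)
Definition num_edits (T : eqType) (S St : seq T) (M : seq (nat * nat)) : nat :=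
  (size S - size M + (size St - size M))%N.

Definition misdecodings (M : seq (nat * nat)) (dec : nat -> nat) : nat :=
  count (fun p : nat * nat => dec p.2 != p.1) M.

(* Main.v *)
Require Import Defs.
From HB Require Import structures.
From mathcomp Require Import all_boot all_order all_algebra.
From mathcomp Require Import boolp classical_sets reals.
From mathcomp Require Import zify lra.
Import Order.TTheory GRing.Theory Num.Theory.
Set Implicit Arguments. Unset Strict Implicit. Unset Printing Implicit Defensive.

Section LCS.
Local Open Scope nat_scope.
Variable T : eqType.
Implicit Types a b c : seq T.

Lemma lcs_ge a b c : subseq c a -> subseq c b -> size c <= lcs a b.
Proof.
case/subseqP=> m Hm ->{c} Hb.
have Hm' : size m == size a by apply/eqP.
pose t : (size a).-tuple bool := Tuple Hm'.
rewrite /lcs.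
exact: (@leq_bigmax_cond _ (fun t : (size a).-tuple bool => subseq (mask t a) b) (fun t => size (mask t a)) t Hb).
Qed.

Lemma lcs_wit a b : exists c, [/\ subseq c a, subseq c b & size c = lcs a b].
Proof.
pose t0 : (size a).-tuple bool := nseq_tuple (size a) false.
have P0 : subseq (mask t0 a) b by rewrite /= mask_false sub0seq.
rewrite /lcs (bigop.bigmax_eq_arg t0 P0).
case: arg_maxnP => // t Pt _.
by exists (mask t a); split => //; apply: mask_subseq.
Qed.

Lemma lcs_sym a b : lcs a b = lcs b a.
Proof.
apply/eqP; rewrite eqn_leq.
have [c [h1 h2 E]] := lcs_wit a b.
have [c' [h1' h2' E']] := lcs_wit b a.
have := lcs_ge h2 h1; have := lcs_ge h2' h1'; lia.
Qed.

Lemma lcs_leq_size a b : lcs a b <= size a.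
Proof. by have [c [h1 h2 <-]] := lcs_wit a b; apply: size_subseq. Qed.

Lemma lcs_leq_size_r a b : lcs a b <= size b.
Proof. by rewrite lcs_sym lcs_leq_size. Qed.

Lemma mask_and_subseq (m1 m2 : bitseq) (s : seq T) :
  size m1 = size s -> size m2 = size s ->
  subseq (mask [seq x.1 && x.2 | x <- zip m1 m2] s) (mask m1 s).
Proof.
elim: s m1 m2 => [|x s IH] [|b1 m1] [|b2 m2] //= [H1] [H2].
have IH' := IH _ _ H1 H2.
case: b1 IH'; case: b2 => /= IH' //.
- by rewrite eqxx.
- exact: subseq_trans IH' (subseq_cons _ _).
Qed.

Lemma count_and (m1 m2 : bitseq) :
  size m1 = size m2 ->
  count id m1 + count id m2 <= count id [seq x.1 && x.2 | x <- zip m1 m2] + size m1.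
Proof.
elim: m1 m2 => [|b1 m1 IH] [|b2 m2] //= [H].
have := IH _ H; case: b1; case: b2 => /=; lia.
Qed.

Lemma lcs_tri a b c : lcs a b + lcs b c <= lcs a c + size b.
Proof.
have [c1 [h1a h1b <-]] := lcs_wit a b.
have [c2 [h2b h2c <-]] := lcs_wit b c.
case/subseqP: h1b => m1 Hm1 E1.
case/subseqP: h2b => m2 Hm2 E2.
set m := [seq x.1 && x.2 | x <- zip m1 m2].
have s1 : subseq (mask m b) c1 by rewrite E1; apply: mask_and_subseq.
have s2 : subseq (mask m b) c2.
  have -> : m = [seq x.1 && x.2 | x <- zip m2 m1].
    rewrite /m; elim: m1 m2 {E1 E2 s1 Hm1 Hm2 m} => [|x1 m1 IH] [|x2 m2] //=.
    by rewrite andbC IH.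
  by rewrite E2; apply: mask_and_subseq.
have := lcs_ge (subseq_trans s1 h1a) (subseq_trans s2 h2c).
have szm : size m = size b by rewrite /m size_map size_zip Hm1 Hm2 minnn.
rewrite size_mask // E1 E2 !size_mask //.
have := count_and (etrans Hm1 (esym Hm2)); rewrite -/m Hm1; lia.
Qed.

End LCS.

Definition Rlt (p q : nat * nat) := (p.1 < q.1)%N && (p.2 < q.2)%N.

Lemma Rlt_trans : transitive Rlt.
Proof. move=> y x z /andP[h1 h2] /andP[h3 h4]; apply/andP; split; lia. Qed.

Section Idx.
Local Open Scope nat_scope.
Variable T : eqType.

Lemma pw_shift c xs : pairwise ltn xs -> all (leq c) xs -> pairwise ltn (map (subn^~ c) xs).
Proof.
elim: xs => //= j xs IH /andP[Hj Hp] /andP[cj Hc]; rewrite IH // andbT all_map.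
apply/allP => k Hk /=; move/allP: Hj => /(_ k Hk); move/allP: Hc => /(_ k Hk) /=; lia.
Qed.

Lemma subseq_nth_off (x0 : T) (xs : seq nat) (s : seq T) off :
  pairwise ltn xs -> all (fun i => off <= i < off + size s) xs ->
  subseq (map (fun i => nth x0 s (i - off)) xs) s.
Proof.
elim: xs s off => [|i xs IH] s off /=; first by rewrite sub0seq.
case/andP=> Hi Hp /andP[/andP[H1 Hsz] Hall].
apply: (subseq_trans _ (drop_subseq s (i - off))).
have Hsz' : i - off < size s by lia.
rewrite (drop_nth x0 Hsz') /= eqxx.
have -> : map (fun j => nth x0 s (j - off)) xs =
          map (fun j => nth x0 (drop (i - off).+1 s) (j - i.+1)) xs.
  apply/eq_in_map => j Hj /=; rewrite nth_drop.
  by move/allP: Hi => /(_ j Hj) /= ?; congr nth; lia.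
apply: IH => //.
apply/allP => j Hj /=; rewrite size_drop.
move/allP: Hi => /(_ j Hj) /=; move/allP: Hall => /(_ j Hj) /=; lia.
Qed.

Lemma subseq_nth (x0 : T) (s : seq T) (xs : seq nat) :
  pairwise ltn xs -> all (fun i => i < size s) xs -> subseq (map (nth x0 s) xs) s.
Proof.
move=> Hp Ha.
have := @subseq_nth_off x0 xs s 0 Hp.
have -> : map (fun i => nth x0 s (i - 0)) xs = map (nth x0 s) xs.
  by apply/eq_map => i; rewrite subn0.
apply; apply/allP => i Hi /=; move/allP: Ha => /(_ i Hi) /=; lia.
Qed.

Lemma subseq_idx (x0 : T) (c s : seq T) : subseq c s ->
  exists xs, [/\ pairwise ltn xs, all (fun i => i < size s) xs & c = map (nth x0 s) xs].
Proof.
elim: s c => [|y s IH] c.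
  by rewrite subseq0 => /eqP ->; exists [::].
case: c => [_|z c]; first by exists [::].
rewrite /=; case: eqP => [<- Hc|_ Hc].
- have [xs [Hp Ha ->]] := IH _ Hc.
  exists (0 :: map S xs); split => /=.
  + rewrite all_map /=; apply/andP; split; first by apply/allP.
    by elim: xs Hp {Ha} => //= j xs IH2 /andP[Hj Hp]; rewrite IH2 // all_map andbT.
  + by rewrite all_map; apply/allP => j Hj /=; move/allP: Ha => /(_ j Hj).
  + by rewrite -map_comp.
- have [xs [Hp Ha E]] := IH _ Hc.
  exists (map S xs); split => /=.
  + by elim: xs Hp {Ha E} => //= j xs IH2 /andP[Hj Hp]; rewrite IH2 // all_map andbT.
  + by rewrite all_map; apply/allP => j Hj /=; move/allP: Ha => /(_ j Hj).
  + by rewrite E -map_comp.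
Qed.

End Idx.

Notation sfx := Defs.suffix.

Section Suffix.
Local Open Scope nat_scope.
Variable T : eqType.

Lemma onthE (s : seq T) i : onth s i = nth None (map Some s) i.
Proof. by elim: s i => [|x s IH] [|i] //=. Qed.

Lemma onth_take (s : seq T) v i : i < v -> onth (take v s) i = onth s i.
Proof. by elim: s v i => [|x s IH] [|v] [|i] //= h; apply: IH. Qed.


Lemma sfxE k (s : seq T) :
  sfx k s = nseq (k - size s) None ++ map Some (drop (size s - k) s).
Proof.
rewrite /sfx /Defs.suffix; case: (leqP k (size s)) => h.
- have -> : k - size s = 0 by lia.
  by rewrite /= map_drop.
- have -> : size s - k = 0 by lia.
  by rewrite !drop0.
Qed.

Lemma size_sfx k (s : seq T) : size (sfx k s) = k.
Proof. rewrite sfxE size_cat size_nseq size_map size_drop; lia. Qed.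

Lemma nth_sfx k (s : seq T) p : p < k ->
  nth None (sfx k s) p = if p + size s < k then None else onth s (p + size s - k).
Proof.
move=> hp; rewrite sfxE nth_cat size_nseq.
case: ifP => h1; case: ifP => h2 //.
- by rewrite nth_nseq h1.
- lia.
- lia.
- by rewrite onthE map_drop nth_drop; congr nth; lia.
Qed.

End Suffix.

Lemma pw_map_in (A B : eqType) (r : rel A) (r' : rel B) (P : pred A) (f : A -> B) L :
  pairwise r L -> all P L -> (forall x y, P x -> P y -> r x y -> r' (f x) (f y)) ->
  pairwise r' (map f L).
Proof.
move=> + + H; elim: L => //= a L IH /andP[ha hp] /andP[pa pl].
rewrite IH // andbT all_map; apply/allP => b hb /=.
apply: H => //; first by move/allP: pl; apply.
by move/allP: ha; apply.
Qed.

Lemma pw_zip (xs ys : seq nat) : pairwise ltn xs -> pairwise ltn ys -> pairwise Rlt (zip xs ys).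
Proof.
elim: xs ys => [|x xs IH] [|y ys] //= /andP[hx px] /andP[hy py].
rewrite IH // andbT.
elim: xs ys {IH px py} hx hy => [|x' xs IH] [|y' ys] //= /andP[h1 h2] /andP[h3 h4].
by rewrite /Rlt /= h1 h3 /= IH.
Qed.

Section Box.
Local Open Scope nat_scope.
Variable T : eqType.

Lemma onth_neq (s : seq T) i : i < size s -> onth s i != None.
Proof. by elim: s i => [|x s IH] [|i] //= h; apply: IH. Qed.

Lemma box (S : seq T) v u : 0 < v -> v < u -> u <= size S ->
  u - v < 2 * lcs (sfx (u - v) (take v S)) (sfx (u - v) (take u S)) ->
  exists L : seq (nat * nat), [/\ pairwise Rlt L, u - v < 2 * size L &
     all (fun p => [&& v < p.1 + (u - v), p.1 <= v, v < p.2, p.2 <= u, 0 < p.1 &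
                       onth S p.1.-1 == onth S p.2.-1]) L].
Proof.
move=> v0 vu uS.
set d := u - v; set x := sfx d (take v S); set y := sfx d (take u S) => Hl.
have [c [hx hy hc]] := lcs_wit x y.
have [xs [px ax ex]] := subseq_idx None hx.
have [ys [py ay ey]] := subseq_idx None hy.
have sxs : size xs = size c by rewrite ex size_map.
have sys : size ys = size c by rewrite ey size_map.
have szx : size x = d by rewrite size_sfx.
have szy : size y = d by rewrite size_sfx.
have tv : size (take v S) = v by rewrite size_takel //; lia.
have tu : size (take u S) = u by rewrite size_takel.
have ny q : q < d -> nth None y q = onth S (q + v).
  move=> hq; rewrite nth_sfx // tu.
  have -> : (q + u < d) = false by apply/negbTE; rewrite -leqNgt; lia.
  rewrite onth_take; last by lia.
  by congr onth; lia.
have nx p : p < d -> nth None x p = if p + v < d then None else onth S (p + v - d).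
  move=> hp; rewrite nth_sfx // tv; case: ifP => // _.
  by rewrite onth_take //; lia.
set Z := zip xs ys.
have HZ : all (fun pq => [&& pq.1 < d, pq.2 < d, d <= pq.1 + v &
                           onth S (pq.1 + v - d) == onth S (pq.2 + v)]) Z.
  apply/(all_nthP (0,0)) => r; rewrite /Z size_zip sxs sys minnn => hr.
  rewrite nth_zip /=; last by rewrite sxs sys.
  have hp : nth 0 xs r < d by rewrite -szx; move/allP: ax; apply; apply: mem_nth; rewrite sxs.
  have hq : nth 0 ys r < d by rewrite -szy; move/allP: ay; apply; apply: mem_nth; rewrite sys.
  have E : nth None x (nth 0 xs r) = nth None y (nth 0 ys r).
    rewrite -(nth_map 0 None (nth None x)) ?sxs // -ex.
    by rewrite -(nth_map 0 None (nth None y)) ?sys // -ey.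
  move: E; rewrite nx // ny //.
  case: ifP => h.
    have hlt : nth 0 ys r + v < size S by lia.
    by move=> E; move: (onth_neq hlt); rewrite -E.
  move=> ->; rewrite hp hq eqxx /= andbT; lia.
exists (map (fun pq => (pq.1 + v + 1 - d, pq.2 + v + 1)) Z); split.
- apply: (pw_map_in (P := fun pq => d <= pq.1 + v)) (pw_zip px py) _ _.
    by apply: sub_all HZ => pq /and4P[].
  by move=> [p q] [p' q'] /= h1 h2 /andP[/= h3 h4]; rewrite /Rlt /=; apply/andP; split; lia.
- by rewrite size_map /Z size_zip sxs sys minnn hc.
- rewrite all_map; apply: sub_all HZ => [[p q]] /and4P[/= h1 h2 h3 /eqP h4] /=.
  have -> : (p + v + 1 - d).-1 = p + v - d by lia.
  have -> : (q + v + 1).-1 = q + v by lia.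
  rewrite h4 eqxx andbT; apply/and5P; split; lia.
Qed.

End Box.

Section Vitali.
Local Open Scope nat_scope.
Variable T : eqType.
Variable S : seq T.

Definition dd (p : nat * nat) := p.2 - p.1.
Definition inBox (p c : nat * nat) := [&& p.1 < c.1 + dd p, c.1 <= p.1, p.1 < c.2 & c.2 <= p.2].
Definition compat (p q : nat * nat) :=
  ((q.2 <= p.1) && (q.1 + dd p <= p.1)) || ((p.2 <= q.1) && (p.1 + dd q <= q.1)).
Definition GoodP (p : nat * nat) := [&& 0 < p.1, p.1 < p.2, p.2 <= size S &
   dd p < 2 * lcs (sfx (dd p) (take p.1 S)) (sfx (dd p) (take p.2 S))].
Definition valid (c : nat * nat) := [&& 0 < c.1, c.1 < c.2, c.2 <= size S &
   onth S c.1.-1 == onth S c.2.-1].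

Lemma compat_box p q c c' : compat p q -> inBox p c -> inBox q c' -> Rlt c c' || Rlt c' c.
Proof.
rewrite /compat /inBox /Rlt /dd => /orP[/andP[h1 h2]|/andP[h1 h2]] /and4P[a1 a2 a3 a4] /and4P[b1 b2 b3 b4].
- apply/orP; right; apply/andP; split; lia.
- apply/orP; left; apply/andP; split; lia.
Qed.

Lemma conflict_region p q : 0 < p.1 < p.2 -> 0 < q.1 < q.2 -> dd q <= dd p -> ~~ compat p q ->
  (p.1 - dd p < q.1 <= p.2 + dd p) /\ (p.1 - dd p < q.2 <= p.2 + dd p).
Proof.
rewrite /compat /dd => /andP[p1 p2] /andP[q1 q2] hd.
case: (leqP (q.2) (p.1)) => a; case: (leqP (q.1 + (p.2 - p.1)) (p.1)) => b;
case: (leqP (p.2) (q.1)) => c; case: (leqP (p.1 + (q.2 - q.1)) (q.1)) => e //= _; split; apply/andP; split; lia.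
Qed.

Lemma pw_uniq L : pairwise Rlt L -> uniq L.
Proof.
elim: L => //= a L IH /andP[ha hp]; rewrite IH // andbT.
apply/negP => aL; move/allP: ha => /(_ a aL); rewrite /Rlt; lia.
Qed.

Lemma pw_comp L c c' : pairwise Rlt L -> c \in L -> c' \in L -> c != c' -> Rlt c c' || Rlt c' c.
Proof.
elim: L => //= a L IH /andP[ha hp]; rewrite !inE.
case/orP=> [/eqP ->|hc] /orP[/eqP ->|hc'] //; first by rewrite eqxx.
- by move=> _; move/allP: ha => /(_ c' hc') ->.
- by move=> _; move/allP: ha => /(_ c hc) ->; rewrite orbT.
- exact: IH.
Qed.

Lemma count_interval (s : seq nat) lo hi : uniq s -> all (fun x => lo < x <= hi) s -> size s <= hi - lo.
Proof.
move=> us ha; rewrite -(size_iota lo.+1 (hi - lo)); apply: uniq_leq_size => // x hx.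
move/allP: ha => /(_ x hx) /andP[h1 h2]; rewrite mem_iota; lia.
Qed.

Lemma exists_max (P : seq (nat * nat)) : P != [::] -> exists2 p, p \in P & forall q, q \in P -> dd q <= dd p.
Proof.
elim: P => //= a [|b P] IH _.
  by exists a; rewrite ?inE // => q; rewrite inE => /eqP ->.
have [p pP hp] := IH isT.
case: (leqP (dd a) (dd p)) => h.
- exists p; first by rewrite inE pP orbT.
  by move=> q; rewrite inE => /orP[/eqP ->|/hp].
- exists a; first by rewrite inE eqxx.
  move=> q; rewrite inE => /orP[/eqP -> //|/hp]; lia.
Qed.

Lemma vitali (P : seq (nat * nat)) (X : seq nat) : all GoodP P -> uniq X ->
  (forall x, x \in X -> exists2 p, p \in P & (x == p.1) || (x == p.2)) ->
  exists C : seq (nat * nat), [/\ uniq C, all valid C,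
     (forall c c', c \in C -> c' \in C -> c != c' -> Rlt c c' || Rlt c' c),
     (forall c, c \in C -> exists2 p, p \in P & inBox p c) &
     size X <= 6 * size C].
Proof.
have [N] := ubnP (size P); elim: N P X => // N IH P X HN HG uX HX.
case: (altP (P =P [::])) => [P0|Pn0].
  have -> : X = [::].
    by case: X HX {uX} => // x X /(_ x (mem_head _ _)) [p]; rewrite P0.
  by exists [::]; split.
have [[v u] pP pmax] := exists_max Pn0.
set p := (v, u).
have /and4P[p1 p2 p3 p4] : GoodP p by move/allP: HG; apply.
rewrite /= in p1 p2 p3.
have [L [Lpw Lsz Lall]] := box p1 p2 p3 p4.
set P' := filter (compat p) P.
set lo := p.1 - dd p; set hi := p.2 + dd p.
set X' := filter (fun x => ~~ (lo < x <= hi)) X.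
have HN' : size P' < N.
  have : count (compat p) P < size P.
    rewrite -[size P](count_predC (compat p)) -addn1 leq_add2l.
    by rewrite -has_count; apply/hasP; exists p => //=; rewrite /compat /dd /p /=; apply/negP => /orP[] /andP[]; lia.
  by rewrite /P' size_filter; lia.
have HG' : all GoodP P' by rewrite /P' all_filter; apply: sub_all HG => q hq; apply/implyP.
have HX' : forall x, x \in X' -> exists2 q, q \in P' & (x == q.1) || (x == q.2).
  move=> x; rewrite mem_filter => /andP[hreg xX].
  have [q qP hq] := HX x xX.
  exists q => //; rewrite /P' mem_filter qP andbT.
  apply/negP => /negP nc.
  have /and4P[q1 q2 q3 q4] : GoodP q by move/allP: HG; apply.
  have [r1 r2] := conflict_region (p:=p) (q:=q) (introT andP (conj p1 p2)) (introT andP (conj q1 q2)) (pmax q qP) nc.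
  by move: hreg; rewrite /lo /hi; case/orP: hq => /eqP ->; rewrite ?r1 ?r2.
have [C' [uC' vC' cC' bC' sC']] := IH P' X' HN' HG' (filter_uniq _ uX) HX'.
have LinB : forall c, c \in L -> inBox p c.
  move=> c cL; move/allP: Lall => /(_ c cL) /and5P[a1 a2 a3 a4 /andP[a5 a6]].
  by rewrite /inBox /dd a1 a2 a3 a4.
have Lval : all valid L.
  apply/allP => c cL; move/allP: Lall => /(_ c cL) /and5P[a1 a2 a3 a4 /andP[a5 a6]].
  rewrite /valid a5 a6 andbT /=; apply/andP; split; [clear -a2 a3; lia | exact: leq_trans a4 p3].
have cross : forall c c', c \in L -> c' \in C' -> Rlt c c' || Rlt c' c.
  move=> c c' cL cC; have [q qP' qb] := bC' c' cC.
  move: qP'; rewrite /P' mem_filter => /andP[hc _].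
  exact: compat_box hc (LinB c cL) qb.
exists (L ++ C'); split.
- rewrite cat_uniq pw_uniq // uC' andbT; apply/hasPn => c' cC; apply/negP => cL.
  by move: (cross _ _ cL cC); rewrite /Rlt !ltnn.
- by rewrite all_cat Lval.
- move=> c c'; rewrite !mem_cat => /orP[cL|cC] /orP[cL'|cC2] neq.
  + exact: pw_comp Lpw cL cL' neq.
  + exact: cross.
  + by rewrite orbC; apply: cross.
  + exact: cC'.
- move=> c; rewrite mem_cat => /orP[cL|cC]; first by exists p => //; apply: LinB.
  have [q qP' qb] := bC' c cC; exists q => //.
  by move: qP'; rewrite /P' mem_filter => /andP[].
- rewrite size_cat mulnDr.
  rewrite -(count_predC (fun x => lo < x <= hi) X).
  have h1 : count (fun x => lo < x <= hi) X <= hi - lo.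
    rewrite -size_filter; apply: count_interval; first exact: filter_uniq.
    by rewrite all_filter; apply/allP => x _; apply/implyP.
  have h2 : count (predC (fun x => lo < x <= hi)) X = size X'.
    by rewrite /X' size_filter.
  move: h1 Lsz sC' p2; rewrite h2 /lo /hi /dd /=.
  move: (size X') (count _ X) (size L) (size C') => a b c e.
  clear; lia.
Qed.

End Vitali.

Section High.
Local Open Scope nat_scope.
Variable T : eqType.

Lemma cutoff (P : pred nat) r : exists s, [/\ s <= r, (s == 0) || P s & forall t, s < t <= r -> ~~ P t].
Proof.
elim: r => [|r [s [h1 h2 h3]]].
  by exists 0; split => // t /andP[a b]; exfalso; lia.
case: (boolP (P r.+1)) => hp.
  exists r.+1; split => //.
  by move=> t /andP[a b]; exfalso; lia.
exists s; split => //; first lia.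
move=> t /andP[a b]; case: (ltngtP t r.+1) => [c|c|->//]; last by exfalso; lia.
apply: h3; apply/andP; split; lia.
Qed.

Lemma count_take_le (A : eqType) (a : pred A) (M : seq A) x r : x <= r ->
  count a (take r M) <= count a (take x M) + (r - x).
Proof.
move=> h; rewrite -(cat_take_drop x (take r M)) count_cat take_takel // leq_add2l.
apply: leq_trans (count_size _ _) _; rewrite size_drop size_take; case: ifP; lia.
Qed.

Lemma subseq_nseq (A : eqType) (x : A) a b : a <= b -> subseq (nseq a x) (nseq b x).
Proof.
elim: b a => [|b IH] [|a] //= h; rewrite ?sub0seq // eqxx; exact: IH.
Qed.

Lemma pairwise_iota (r : rel nat) a n :
  (forall t t', a <= t -> t < t' -> t' < a + n -> r t t') -> pairwise r (iota a n).
Proof.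
elim: n a => [|n IH] a //= H.
apply/andP; split.
  apply/allP => t; rewrite mem_iota => /andP[h1 h2]; apply: H; lia.
apply: IH => t t' h1 h2 h3; apply: H; lia.
Qed.

Lemma onth_drop (s : seq T) a i : onth (drop a s) i = onth s (a + i).
Proof. by rewrite !onthE map_drop nth_drop. Qed.

Lemma window_subseq (S : seq T) (A : nat -> nat) r k w pad :
  A r <= size S -> pad <= k - A r ->
  (forall t, w < t <= r -> [&& 0 < A t, A r < A t + k & A t <= A r]) ->
  (forall t t', w < t -> t < t' -> t' <= r -> A t < A t') ->
  subseq (nseq pad None ++ map (fun t => onth S (A t).-1) (iota w.+1 (r - w)))
         (sfx k (take (A r) S)).
Proof.
move=> hS hpad hA hmon.
rewrite sfxE size_takel //; apply: cat_subseq; first exact: subseq_nseq.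
set W := drop (A r - k) (take (A r) S).
have szW : size W = A r - (A r - k) by rewrite /W size_drop size_takel.
have -> : map (fun t => onth S (A t).-1) (iota w.+1 (r - w)) =
          map (nth None (map Some W)) (map (fun t => (A t).-1 - (A r - k)) (iota w.+1 (r - w))).
  rewrite -map_comp; apply/eq_in_map => t; rewrite mem_iota => ht /=.
  have /and3P[a1 a2 a3] : [&& 0 < A t, A r < A t + k & A t <= A r] by apply: hA; lia.
  rewrite -onthE /W onth_drop onth_take; last by lia.
  by congr onth; lia.
apply: subseq_nth.
  rewrite pairwise_map; apply: pairwise_iota => t t' h1 h2 h3 /=.
  have /and3P[a1 a2 a3] : [&& 0 < A t, A r < A t + k & A t <= A r] by apply: hA; lia.
  have := hmon t t' h1 h2 (_ : t' <= r); lia.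
rewrite all_map size_map szW; apply/allP => t; rewrite mem_iota => ht /=.
have /and3P[a1 a2 a3] : [&& 0 < A t, A r < A t + k & A t <= A r] by apply: hA; lia.
lia.
Qed.

Lemma window_lcs (S St : seq T) (A B : nat -> nat) r k w :
  w <= r -> A r <= size S -> B r <= size St ->
  (forall t, w < t <= r -> [&& 0 < A t, A r < A t + k & A t <= A r]) ->
  (forall t, w < t <= r -> [&& 0 < B t, B r < B t + k & B t <= B r]) ->
  (forall t t', w < t -> t < t' -> t' <= r -> A t < A t' /\ B t < B t') ->
  (forall t, w < t <= r -> onth S (A t).-1 = onth St (B t).-1) ->
  (k - maxn (A r) (B r)) + (r - w) <= lcs (sfx k (take (A r) S)) (sfx k (take (B r) St)).
Proof.
move=> hw hS hSt hA hB hmon heq.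
set pad := k - maxn (A r) (B r).
have -> : pad + (r - w) = size (nseq pad None ++ map (fun t => onth S (A t).-1) (iota w.+1 (r - w))).
  by rewrite size_cat size_nseq size_map size_iota.
apply: lcs_ge.
  apply: window_subseq => //; first by rewrite /pad; lia.
  by move=> t t' h1 h2 h3; case: (hmon t t' h1 h2 h3).
have -> : map (fun t => onth S (A t).-1) (iota w.+1 (r - w)) =
          map (fun t => onth St (B t).-1) (iota w.+1 (r - w)).
  apply/eq_in_map => t; rewrite mem_iota => ht; apply: heq; lia.
apply: window_subseq => //; first by rewrite /pad; lia.
by move=> t t' h1 h2 h3; case: (hmon t t' h1 h2 h3).
Qed.

End High.

Section HighCount.
Local Open Scope nat_scope.
Variable T : eqType.
Variables S St : seq T.

Definition hiP (p : nat * nat) : bool :=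
  `[< exists2 k, 0 < k & k <= 2 * ED (sfx k (take p.1 S)) (sfx k (take p.2 St)) >].

Lemma high_count (M : seq (nat * nat)) : monotone_matching S St M ->
  count hiP M <= 4 * num_edits S St M.
Proof.
case/andP=> Hs Ha.
have HsR : sorted Rlt M := Hs.
set T0 := size M.
set M0 := (0, 0) :: M.
pose A r := (nth (0,0) M0 r).1.
pose B r := (nth (0,0) M0 r).2.
have HsM0 : sorted Rlt M0.
  rewrite /M0 /=; case: M Hs Ha {HsR T0 M0 A B} => //= p M' -> /andP[/and3P[/andP[h1 _] /andP[h2 _] _] _].
  by rewrite /Rlt h1 h2.
have strict : forall x y, x < y -> y <= T0 -> A x < A y /\ B x < B y.
  move=> x y hxy hy.
  have hx : x \in [pred n | n < size M0] by rewrite inE /M0 /=; lia.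
  have hy' : y \in [pred n | n < size M0] by rewrite inE /M0 /=; lia.
  by have /andP[] := sorted_ltn_nth Rlt_trans (0,0) HsM0 x y hx hy' hxy.
have A0 : A 0 = 0 by [].
have B0 : B 0 = 0 by [].
have mon : forall x y, x <= y -> y <= T0 -> A x + (y - x) <= A y /\ B x + (y - x) <= B y.
  move=> x y; elim: y => [|y IH] hxy hy.
    by have -> : x = 0 by lia.
  case: (ltngtP x y.+1) => [h|h|<-]; last by rewrite subnn !addn0.
  - have [IH1 IH2] := IH (ltac:(lia) : x <= y) (ltac:(lia) : y <= T0).
    have [t1 t2] := strict y y.+1 (ltnSn y) hy.
    split; lia.
  - exfalso; lia.
have valid : forall t, 0 < t <= T0 ->
    [/\ 0 < A t, A t <= size S, 0 < B t, B t <= size St & onth S (A t).-1 = onth St (B t).-1].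
  case=> // t /andP[_ ht].
  have : nth (0,0) M t \in M by apply: mem_nth.
  move/allP: Ha => H /H /and3P[/andP[a1 a2] /andP[b1 b2] /eqP e].
  by rewrite /A /B /M0 /=; split.
have main : forall r, r <= T0 -> count hiP (take r M) <= 4 * (A r + B r - 2 * r).
  elim/ltn_ind => r IH hr.
  case: r IH hr => [|r] IH hr; first by rewrite take0.
  have E : take r.+1 M = take r M ++ [:: nth (0,0) M r] by rewrite (take_nth (0,0)) // cats1.
  have pr : nth (0,0) M r = (A r.+1, B r.+1) by rewrite /A /B /=; case: (nth _ _ _).
  have [st1 st2] := strict r r.+1 (ltnSn r) hr.
  have [m1 m2] := mon 0 r (leq0n r) (ltnW hr).
  rewrite A0 B0 !subn0 !add0n in m1 m2.
  case: (boolP (hiP (nth (0,0) M r))) => h; last first.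
    rewrite E count_cat /= (negbTE h) addn0.
    have := IH r (ltnSn r) (ltnW hr); clear -m1 m2 st1 st2; lia.
  move: h; rewrite pr /hiP => /asboolP[k k0 hk] /=.
  have [s [hs0 hs1 hs2]] := cutoff (fun t => B t + k <= B r.+1) r.+1.
  have [s' [hs0' hs1' hs2']] := cutoff (fun t => A t + k <= A r.+1) r.+1.
  have [v1 v2 v3 v4 v5] := valid r.+1 (ltac:(lia) : 0 < r.+1 <= T0).
  have hsr : s < r.+1.
    case: (ltngtP s r.+1) => // hh; [exfalso; lia|].
    by move: hs1; rewrite hh /=; lia.
  set w := maxn s s'.
  have L0 := @window_lcs T S St A B r.+1 k w (ltac:(rewrite /w; lia) : w <= r.+1) v2 v4.
  have L1 : k - maxn (A r.+1) (B r.+1) + (r.+1 - w) <=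
            lcs (sfx k (take (A r.+1) S)) (sfx k (take (B r.+1) St)).
    apply: L0.
    - move=> t /andP[t1 t2]; have [u1 u2 u3 u4 u5] := valid t (ltac:(lia) : 0 < t <= T0).
      have [n1 n2] := mon t r.+1 t2 hr.
      have := hs2' t (ltac:(lia) : s' < t <= r.+1); rewrite /w in t1; lia.
    - move=> t /andP[t1 t2]; have [u1 u2 u3 u4 u5] := valid t (ltac:(lia) : 0 < t <= T0).
      have [n1 n2] := mon t r.+1 t2 hr.
      have := hs2 t (ltac:(lia) : s < t <= r.+1); rewrite /w in t1; lia.
    - move=> t t' h1 h2 h3; apply: strict => //; lia.
    - move=> t /andP[t1 t2]; by have [] := valid t (ltac:(lia) : 0 < t <= T0).
  have lk : lcs (sfx k (take (A r.+1) S)) (sfx k (take (B r.+1) St)) <= k.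
    by apply: leq_trans (lcs_leq_size _ _) _; rewrite size_sfx.
  move: hk; rewrite /ED /= !size_sfx => hk.
  have C1 := count_take_le hiP M (ltnW hsr).
  have sT : s <= T0 := ltnW (leq_trans hsr hr).
  have IHs := IH s hsr sT.
  have [ms1 ms2] := mon s r.+1 (ltnW hsr) hr.
  have hs1b := hs2 s.+1 (introT andP (conj (ltnSn s) hsr)).
  have [mm1 mm2] := mon s.+1 r.+1 hsr hr.
  have hRk : r.+1 - s <= k by clear -hs1b mm2 hsr; lia.
  move: (lcs _ _) L1 lk hk => l L1 lk hk.
  have K : k - l <= (A r.+1 - A s - (r.+1 - s)) + (B r.+1 - B s - (r.+1 - s)).
    case: (leqP s' s) => hss.
    - have ew : w = s by rewrite /w; apply/maxn_idPl.
      rewrite ew in L1.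
      case/orP: hs1 => [/eqP s0 | hb].
        have s0' : s' = 0 by clear -hss s0; lia.
        rewrite s0 A0 B0 in L1 *; clear -L1 m1 m2 st1 st2; lia.
      clear -L1 ms1 ms2 hb; lia.
    - have ew : w = s' by rewrite /w; apply/maxn_idPr; apply: ltnW.
      rewrite ew in L1.
      have ha : A s' + k <= A r.+1 by case/orP: hs1' => // /eqP e; rewrite e in hss.
      have [ss1 ss2] := mon s s' (ltnW hss) (leq_trans hs0' hr).
      clear -L1 ha ss1 ss2 ms1 ms2 hs0'; lia.
  have Kk : k <= 4 * (k - l) by clear -hk lk; lia.
  have [z1 z2] := mon 0 s (leq0n s) sT.
  rewrite A0 B0 in z1 z2.
  move: (count hiP (take s M)) (count hiP (take r.+1 M)) C1 IHs => c1 c2 C1 IHs.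
  clear -C1 IHs K Kk hRk ms1 ms2 z1 z2; lia.
have := main T0 (leqnn T0).
rewrite /T0 take_size -/T0 /num_edits -/T0.
have [a1 a2] := mon 0 T0 (leq0n _) (leqnn _).
rewrite A0 B0 !subn0 !add0n in a1 a2.
have [b1 b2] : A T0 <= size S /\ B T0 <= size St.
  case: (posnP T0) => [->|h]; first by rewrite A0 B0.
  by have [] := valid T0 (introT andP (conj h (leqnn _))).
move: (count hiP M) (A T0) (B T0) a1 a2 b1 b2 => c x y a1 a2 b1 b2.
clear -a1 a2 b1 b2; lia.
Qed.
End HighCount.

Section ChainMM.
Local Open Scope nat_scope.
Variable T : eqType.

Definition le1 (p q : nat * nat) := p.1 <= q.1.

Lemma pw_le_Rlt (s : seq (nat * nat)) : pairwise le1 s -> uniq s ->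
  (forall c c', c \in s -> c' \in s -> c != c' -> Rlt c c' || Rlt c' c) -> pairwise Rlt s.
Proof.
elim: s => //= a s IH /andP[ha hp] /andP[ua us] H.
rewrite IH ?andbT //; last by move=> c c' hc hc'; apply: H; rewrite inE ?hc ?hc' orbT.
apply/allP => x hx.
have nx : a != x by apply: contraNneq ua => ->.
move: (H a x (mem_head _ _) (ltac:(by rewrite inE hx orbT)) nx) => /orP[//|].
move/allP: ha => /(_ x hx); rewrite /le1 /Rlt => h1 /andP[h2 _]; exfalso; lia.
Qed.

Lemma chain_mm (S : seq T) (C : seq (nat * nat)) : uniq C -> all (valid S) C ->
  (forall c c', c \in C -> c' \in C -> c != c' -> Rlt c c' || Rlt c' c) ->
  exists C', monotone_matching S S C' /\ bad_pairs C' = size C.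
Proof.
move=> uC vC cC.
set C' := sort le1 C.
have pC : perm_eq C' C by rewrite /C' perm_sort.
have tot : total le1 by move=> p q; apply: leq_total.
have tr : transitive le1 by move=> p q r; apply: leq_trans.
have sC : sorted le1 C' by apply: sort_sorted.
have pwR : pairwise Rlt C'.
  apply: pw_le_Rlt; first by rewrite -(sorted_pairwise tr).
    by rewrite (perm_uniq pC).
  by move=> c c'; rewrite !(perm_mem pC); apply: cC.
have vC' : all (valid S) C' by rewrite (perm_all _ pC).
exists C'; split.
- apply/andP; split; first exact: pairwise_sorted pwR.
  apply: sub_all vC' => c /and4P[a1 a2 a3 a4].
  rewrite a1 a4 a3 /= andbT; apply/andP; split => //; lia.
- rewrite /bad_pairs -(perm_size pC).
  apply/eqP; rewrite -all_count; apply: sub_all vC' => c /and4P[a1 a2 a3 a4].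
  by rewrite neq_ltn a2.
Qed.

End ChainMM.

Section RSDfacts.
Local Open Scope ring_scope.
Variable R : realType.
Variable T : eqType.

Lemma ED_le (x y : seq T) k : (ED (sfx k x) (sfx k y) <= 2 * k)%N.
Proof. by rewrite /ED !size_sfx; lia. Qed.

Lemma RSD_ubound (x y : seq T) :
  has_ubound [set r : R | exists2 k : nat, (0 < k)%N &
         r = (ED (sfx k x) (sfx k y))%:R / (2 * k%:R)].
Proof.
exists 1 => r [k k0 ->].
have k0' : (0 : R) < 2 * k%:R by rewrite mulr_gt0 // ltr0n.
rewrite ler_pdivrMr // mul1r -natrM ler_nat; exact: ED_le.
Qed.

Lemma RSD_ge (x y : seq T) k : (0 < k)%N ->
  (ED (sfx k x) (sfx k y))%:R / (2 * k%:R) <= RSD R x y.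
Proof.
move=> k0; apply: (ub_le_sup (RSD_ubound x y)).
by exists k.
Qed.

Lemma RSD_le (x y : seq T) (c : R) :
  (forall k, (0 < k)%N -> (ED (sfx k x) (sfx k y))%:R / (2 * k%:R) <= c) -> RSD R x y <= c.
Proof.
move=> H; apply: ge_sup.
  by exists ((ED (sfx 1 x) (sfx 1 y))%:R / (2 * 1%:R)); exists 1%N.
by move=> r [k k0 ->]; apply: H.
Qed.

Lemma ratio_quarter (e k : nat) : (0 < k)%N ->
  (e%:R / (2 * k%:R) <= 1 / 4 :> R) = (2 * e <= k)%N.
Proof.
move=> k0.
have k0' : (0 : R) < 2 * k%:R by rewrite mulr_gt0 // ltr0n.
rewrite ler_pdivrMr // -(ler_nat R) natrM.
apply/idP/idP => h; lra.
Qed.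

End RSDfacts.

Section Low.
Local Open Scope nat_scope.
Variable T : eqType.

Lemma low_good (S St : seq T) i j l :
  0 < i <= size S -> 0 < l <= size S -> l != i ->
  (forall k, 0 < k -> 2 * ED (sfx k (take i S)) (sfx k (take j St)) < k) ->
  2 * ED (sfx (maxn i l - minn i l) (take l S)) (sfx (maxn i l - minn i l) (take j St))
    <= maxn i l - minn i l ->
  GoodP S (minn i l, maxn i l).
Proof.
move=> /andP[i0 iS] /andP[l0 lS] nli Hi.
set d := maxn i l - minn i l => Hl.
have d0 : 0 < d by rewrite /d; case: (ltngtP i l) nli => h; rewrite ?eqxx //; lia.
set X := sfx d (take i S); set Y := sfx d (take j St); set Z := sfx d (take l S).
have h1 := Hi d d0; rewrite -/X -/Y in h1.
move: h1 Hl; rewrite /ED -/X -/Y -/Z !size_sfx => h1 h2.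
have tri := lcs_tri X Y Z; rewrite size_sfx in tri.
have sym : lcs Y Z = lcs Z Y by apply: lcs_sym.
have b1 : lcs X Y <= d by apply: leq_trans (lcs_leq_size _ _) _; rewrite size_sfx.
have b2 : lcs Z Y <= d by apply: leq_trans (lcs_leq_size _ _) _; rewrite size_sfx.
have key : d < 2 * lcs X Z.
  move: (lcs X Y) (lcs Y Z) (lcs Z Y) (lcs X Z) h1 h2 tri sym b1 b2 => a b c e h1 h2 tri sym b1 b2.
  clear -h1 h2 tri sym b1 b2; lia.
case: (ltngtP i l) => h; last by rewrite h eqxx in nli.
- have e1 : minn i l = i by apply/minn_idPl; apply: ltnW.
  have e2 : maxn i l = l by apply/maxn_idPr; apply: ltnW.
  have edd : d = l - i by rewrite /d e1 e2.
  by rewrite ?e1 ?e2 /GoodP /dd /= -edd -/X -/Z key i0 h lS.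
- have e1 : minn i l = l by apply/minn_idPr; apply: ltnW.
  have e2 : maxn i l = i by apply/maxn_idPl; apply: ltnW.
  have edd : d = i - l by rewrite /d e1 e2.
  by rewrite ?e1 ?e2 /GoodP /dd /= -edd -/X -/Z lcs_sym key l0 h iS.
Qed.

Lemma count_split (A : eqType) (a b : pred A) (s : seq A) :
  count a s <= count b s + count (fun x => a x && ~~ b x) s.
Proof. elim: s => //= x s IH; case: (a x); case: (b x) => /=; lia. Qed.

Lemma pw_uniq_fst (s : seq (nat * nat)) : pairwise Rlt s -> uniq (map fst s).
Proof.
elim: s => //= a s IH /andP[ha hp]; rewrite IH // andbT.
apply/mapP => -[x hx ex]; move/allP: ha => /(_ x hx); rewrite /Rlt ex; lia.
Qed.

End Low.

Unset Implicit Arguments.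
Local Open Scope ring_scope.

Theorem theorem34 (R : realType) (T : eqType) (S : seq T) (eps delta : R) :
  self_matching eps S ->
  forall (St : seq T) (M : seq (nat * nat)) (dec : nat -> nat),
    monotone_matching S St M ->
    (num_edits S St M)%:R <= (size S)%:R * delta ->
    min_RSD_decoder R S St dec ->
    (misdecodings M dec)%:R <= (size S)%:R * (4 * delta + 6 * eps).
Proof.
move=> Hsm St M dec HM He Hdec.
have HM' := HM; case/andP: HM' => Hs Ha.
have HsR : sorted Rlt M := Hs.
have HpR : pairwise Rlt M by rewrite -(sorted_pairwise Rlt_trans).
set lowP := fun p : nat * nat => (dec p.2 != p.1) && ~~ hiP S St p.
have c1 : (misdecodings M dec <= count (hiP S St) M + count lowP M)%N := count_split _ _ M.
have c2 := high_count HM.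
set F := filter lowP M.
set X := map fst F.
set P := map (fun p => (minn p.1 (dec p.2), maxn p.1 (dec p.2))) F.
have uX : uniq X := pw_uniq_fst (pairwise_filter lowP HpR).
have HG : all (GoodP S) P.
  rewrite all_map; apply/allP => p; rewrite mem_filter => /andP[/andP[hd hh] pM] /=.
  move/allP: Ha => /(_ p pM) /and3P[/andP[a1 a2] /andP[b1 b2] _].
  have [/andP[d1 d2] Hmin] := Hdec p.2 (introT andP (conj b1 b2)).
  have NH : forall k, (0 < k)%N -> (2 * ED (sfx k (take p.1 S)) (sfx k (take p.2 St)) < k)%N.
    move=> k k0; rewrite ltnNge; apply/negP => hk; apply: (negP hh); apply/asboolP.
    by exists k.
  apply: (@low_good T S St p.1 p.2 (dec p.2)).
  - by rewrite a1 a2.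
  - by rewrite d1 d2.
  - exact: hd.
  - exact: NH.
  set d := (maxn p.1 (dec p.2) - minn p.1 (dec p.2))%N.
  have d0 : (0 < d)%N.
    rewrite /d; case: (ltngtP p.1 (dec p.2)) hd => h; rewrite ?h ?eqxx //; lia.
  rewrite -(ratio_quarter R _ d0).
  apply: le_trans (RSD_ge R _ _ d0) _.
  apply: le_trans (Hmin p.1 (introT andP (conj a1 a2))) _.
  apply: RSD_le => k k0; rewrite ratio_quarter //; exact: ltnW (NH k k0).
have HX : forall x, x \in X -> exists2 q, q \in P & (x == q.1) || (x == q.2).
  move=> x /mapP[p pF ->]; exists (minn p.1 (dec p.2), maxn p.1 (dec p.2)).
    by apply: (map_f (fun p => (minn p.1 (dec p.2), maxn p.1 (dec p.2)))).
  by case: (leqP p.1 (dec p.2)) => h /=; rewrite ?eqxx ?orbT.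
have [C [uC vC cC _ sC]] := vitali HG uX HX.
have [C' [mC' bC']] := chain_mm uC vC cC.
have hb := Hsm C' mC'.
have sX : size X = count lowP M by rewrite /X size_map /F size_filter.
have Hn : (misdecodings M dec <= 4 * num_edits S St M + 6 * bad_pairs C')%N.
  move: c1 c2 sC; rewrite sX bC'.
  move: (misdecodings M dec) (count _ M) (count lowP M) (num_edits S St M) (size C).
  move=> a b c e f; clear; lia.
have := Hn; rewrite -(ler_nat R) natrD !natrM => Hn'.
lra.
Qed.
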